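(* Let $\mathcal{L}=(n,\mathcal{M},\mathcal{C})$ be a simple linearization and let $\mathcal{T}\subseteq\mathcal{P}$. Suppose $D(\mathcal{L})$ has a subgraph $Z$ with $|U(Z)|>1$ satisfying: (a) its underlying undirected graph is a cycle; (b) $V(Z)\subseteq\mathrm{succ}(\mathcal{T})$; (c) for all $s\in\mathcal{S}$, $t\in\mathcal{T}$ there is at most one directed $t$-$s$-path in $D(\mathcal{L})$; (d) $|\mathrm{pred}(s)\cap L(Z)|\le1$ for all $s\in\mathcal{S}$; (e) $|\mathrm{succ}(t)\cap U(Z)|\le1$ for all $t\in\mathcal{T}$. Then $\mathrm{proj}_{\mathcal{S}\cup\mathcal{T}}(P(\mathcal{L}))$ is not integral.
   Context: $[n]=\{1,\dots,n\}$; a monomial is a nonempty subset of $[n]$; $\mathcal{S}=\{\{i\}:i\in[n]\}$. A linearization is a triple $\mathcal{L}=(n,\mathcal{M},\mathcal{C})$, where $\mathcal{M}$ is a set of monomials with $\mathcal{S}\subseteq\mathcal{M}$ and $\mathcal{C}$ is a set of AND-constraints; each AND-constraint is a set $c\subseteq\mathcal{M}$ whose union $\bigcup c$ (resultant) lies in $\mathcal{M}$. $\mathcal{P}=\mathcal{M}\setminus\mathcal{S}$. Linearizations are consistent: each $m\in\mathcal{P}$ is the resultant of some $c$ with $|m'|<|m|$ for all $m'\in c$. $\mathcal{L}$ is simple if each proper monomial is the resultant of exactly one AND-constraint and $|\mathcal{C}|=|\mathcal{P}|$. $P(\mathcal{L})\subseteq\mathbb{R}^{\mathcal{M}}$ is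 the set of $y$ with $0\le y_m\le1$ ($m\in\mathcal{M}$), $y_{\bigcup c}\le y_m$ ($c\in\mathcal{C}$, $m\in c$), $\sum_{m\in c}y_m\le y_{\bigcup c}+|c|-1$ ($c\in\mathcal{C}$). $D(\mathcal{L})$ has node set $\mathcal{M}$ and, for each $c\in\mathcal{C}$, arcs from $\bigcup c$ to each $m\in c$. Cycles are simple; $V(Z)$ is the node set of $Z$. $\mathrm{succ}(W)$ (resp. $\mathrm{pred}(W)$) is the set of nodes reachable from (resp. which can reach) $W$ by directed paths, including $W$; $\mathrm{succ}(w)=\mathrm{succ}(\{w\})$, $\mathrm{pred}(w)=\mathrm{pred}(\{w\})$. $U(Z)$ (resp. $L(Z)$) is the set of nodes with out-degree (resp. in-degree) at least $2$ in $Z$. $\mathrm{proj}_{\mathcal{M}'}$ is orthogonal projection onto coordinates in $\mathcal{M}'$. *)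

(* Defs.v *)
From HB Require Import structures.
From mathcomp Require Import all_boot all_order all_algebra.
From mathcomp Require Import reals.
Set Implicit Arguments. Unset Strict Implicit. Unset Printing Implicit Defensive.
Import Order.TTheory GRing.Theory Num.Theory.
Local Open Scope ring_scope.

(* Subsets of [n] = {1..n} are represented as subsets of 'I_n = {0..n-1}.
   A monomial is a nonempty element of {set 'I_n}. *)

Definition resultant (n : nat) (c : {set {set 'I_n}}) : {set 'I_n} :=
  \bigcup_(m in c) m.

Definition Sing (n : nat) : {set {set 'I_n}} := [set [set i] | i : 'I_n].

Definition Prop_mono (n : nat) (M : {set {set 'I_n}}) : {set {set 'I_n}} :=
  M :\: Sing n.

Definition linearization (n : nat) (M : {set {set 'I_n}})
    (C : {set {set {set 'I_n}}}) : Prop :=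
  [/\ set0 \notin M, Sing n \subset M &
      forall c, c \in C -> c \subset M /\ resultant c \in M].

Definition consistent (n : nat) (M : {set {set 'I_n}})
    (C : {set {set {set 'I_n}}}) : Prop :=
  forall m, m \in Prop_mono M ->
    exists2 c, c \in C &
      resultant c = m /\ (forall m', m' \in c -> (#|m'| < #|m|)%N).

Definition simple_lin (n : nat) (M : {set {set 'I_n}})
    (C : {set {set {set 'I_n}}}) : Prop :=
  (forall m, m \in Prop_mono M -> #|[set c in C | resultant c == m]| = 1%N) /\
  #|C| = #|Prop_mono M|.

(* P(L), embedded in R^{all subsets} with coordinates outside M fixed to 0 *)
Definition PL (R : realType) (n : nat) (M : {set {set 'I_n}})
    (C : {set {set {set 'I_n}}}) (y : {set 'I_n} -> R) : Prop :=
  [/\ forall m, m \notin M -> y m = 0,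
      forall m, m \in M -> 0 <= y m <= 1,
      forall c m, c \in C -> m \in c -> y (resultant c) <= y m &
      forall c, c \in C ->
        \sum_(m in c) y m <= y (resultant c) + (#|c|%:R - 1)].

(* orthogonal projection onto the coordinates in K (a vector of R^K is
   represented by a function vanishing outside K) *)
Definition proj (R : realType) (n : nat) (K : {set {set 'I_n}})
    (Q : ({set 'I_n} -> R) -> Prop) (x : {set 'I_n} -> R) : Prop :=
  (forall m, m \notin K -> x m = 0) /\
  exists2 y, Q y & forall m, m \in K -> x m = y m.

Definition conv (R : realType) (n : nat) (A : ({set 'I_n} -> R) -> Prop)
    (x : {set 'I_n} -> R) : Prop :=
  exists k (p : 'I_k -> {set 'I_n} -> R) (l : 'I_k -> R),
    [/\ forall i, A (p i), forall i, 0 <= l i, \sum_i l i = 1 &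
        forall m, x m = \sum_i l i * p i m].

Definition integral_polytope (R : realType) (n : nat)
    (Q : ({set 'I_n} -> R) -> Prop) : Prop :=
  forall x, Q x <-> conv (fun z => Q z /\ forall m, z m \is a Num.int) x.

Definition arcD (n : nat) (C : {set {set {set 'I_n}}}) : rel {set 'I_n} :=
  fun u v => [exists c in C, (u == resultant c) && (v \in c)].

Definition succL (n : nat) (C : {set {set {set 'I_n}}}) (W : {set {set 'I_n}})
  : {set {set 'I_n}} := [set v | [exists w in W, connect (arcD C) w v]].
Definition predL (n : nat) (C : {set {set {set 'I_n}}}) (W : {set {set 'I_n}})
  : {set {set 'I_n}} := [set v | [exists w in W, connect (arcD C) v w]].

(* Z = (VZ, AZ) is a subgraph of D(L) whose underlying undirected graph is a
   cycle: the nodes can be cyclically ordered as a duplicate-free sequence s of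
   length >= 3 such that {u,v} is an edge iff u,v are cyclically adjacent. *)
Definition subgraph_cycle (n : nat) (M : {set {set 'I_n}})
    (C : {set {set {set 'I_n}}}) (VZ : {set {set 'I_n}})
    (AZ : {set {set 'I_n} * {set 'I_n}}) : Prop :=
  [/\ VZ \subset M,
      forall u v, (u, v) \in AZ -> arcD C u v &
      exists s : seq {set 'I_n},
        [/\ uniq s, (3 <= size s)%N, VZ =i s &
            forall u v, ((u, v) \in AZ) || ((v, u) \in AZ) =
              [&& u \in s, v \in s & (next s u == v) || (next s v == u)]]].

Definition UZ (n : nat) (VZ : {set {set 'I_n}})
    (AZ : {set {set 'I_n} * {set 'I_n}}) : {set {set 'I_n}} :=
  [set u in VZ | (2 <= #|[set v | (u, v) \in AZ]|)%N].
Definition LZ (n : nat) (VZ : {set {set 'I_n}})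
    (AZ : {set {set 'I_n} * {set 'I_n}}) : {set {set 'I_n}} :=
  [set v in VZ | (2 <= #|[set u | (u, v) \in AZ]|)%N].

Definition at_most_one_path (n : nat) (C : {set {set {set 'I_n}}})
    (t s : {set 'I_n}) : Prop :=
  forall p q : seq {set 'I_n},
    path (arcD C) t p -> uniq (t :: p) -> last t p = s ->
    path (arcD C) t q -> uniq (t :: q) -> last t q = s -> p = q.

(* Main.v *)
Require Import Defs.
From HB Require Import structures.
From mathcomp Require Import all_boot all_order all_algebra.
From mathcomp Require Import reals.
From mathcomp Require Import lra zify.
Import Order.TTheory GRing.Theory Num.Theory.
Set Implicit Arguments. Unset Strict Implicit. Unset Printing Implicit Defensive.


Lemma up_run (D U : nat -> bool) m c k :
  (forall j, (j < m)%N -> D j || U j) -> (c + k < m)%N -> U c ->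
  (forall e, (c < e <= c + k)%N -> ~~ (U e.-1 && D e)) ->
  forall i, (i <= k)%N -> U (c + i).
Proof.
move=> hDU hck hU hno; elim=> [|i IH] hi; first by rewrite addn0.
have hUi := IH (ltnW hi).
have := hDU (c + i.+1)%N ltac:(lia).
case/orP => // hD; exfalso.
move: (hno (c + i.+1)%N ltac:(lia)); rewrite addnS /= hUi /=.
by rewrite -addnS hD.
Qed.

Lemma up_sub (T : finType) (f : nat -> {set T}) (U : nat -> bool) c k :
  (forall j, U j -> f j \subset f j.+1) -> (forall i, (i <= k)%N -> U (c + i)) ->
  forall i, (i <= k.+1)%N -> f c \subset f (c + i).
Proof.
move=> hUs hk; elim=> [|i IH] hi; first by rewrite addn0.
apply: subset_trans (IH (ltnW hi)) _; rewrite addnS; apply: hUs; apply: hk; lia.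
Qed.

Lemma walk (T : finType) (f : nat -> {set T}) (D U : nat -> bool) m :
  (forall j, (j < m)%N -> D j || U j) ->
  (forall j, (j < m)%N -> ~~ (D j && U j)) ->
  (forall j, D j -> f j.+1 \subset f j) ->
  (forall j, U j -> f j \subset f j.+1) ->
  forall k a, (a + k < m)%N -> D a -> U (a + k) ->
  (forall e, (a < e <= a + k)%N -> ~~ (U e.-1 && D e)) ->
  exists2 c, (a <= c <= a + k.+1)%N &
    (forall j, (a <= j <= a + k.+1)%N -> f c \subset f j).
Proof.
move=> hDU hnDU hDs hUs; elim=> [|k IH] a hak hDa hUa hno.
  by move: (hnDU a ltac:(lia)); rewrite addn0 in hUa; rewrite hDa hUa.
case hD1: (D a.+1).
  have [c hc hsub] := IH a.+1 ltac:(lia) hD1 ltac:(by rewrite addSnnS)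
     ltac:(move=> e he; apply: hno; lia).
  exists c; first lia.
  move=> j hj; case: (eqVneq j a) => [->|hja].
    by apply: subset_trans (hsub a.+1 ltac:(lia)) (hDs _ hDa).
  by apply: hsub; lia.
have hU1 : U a.+1 by move: (hDU a.+1 ltac:(lia)); rewrite hD1.
have hrun := @up_run D U m a.+1 k hDU ltac:(lia) hU1 ltac:(move=> e he; apply: hno; lia).
have hs := up_sub hUs hrun.
exists a.+1; first lia.
move=> j hj; case: (eqVneq j a) => [->|hja]; first exact: hDs.
have -> : j = (a.+1 + (j - a.+1))%N by lia.
apply: hs; lia.
Qed.

Definition upI (T : finType) (f : nat -> {set T}) (D U : nat -> bool) m : {set T} :=
  \bigcup_(e < m | (0 < (e : nat))%N && (U (e : nat).-1 && D e)) f e.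

Lemma upIP (T : finType) (f : nat -> {set T}) (D U : nat -> bool) m x :
  reflect (exists2 e, (0 < e < m)%N && (U e.-1 && D e) & x \in f e) (x \in upI f D U m).
Proof.
apply: (iffP bigcupP).
  by case=> e /andP [h0 hu] hx; exists e => //; rewrite h0 ltn_ord.
case=> e /andP [/andP [h0 hm] hu] hx; exists (Ordinal hm) => //=.
by rewrite h0.
Qed.

Lemma comb (T : finType) (f : nat -> {set T}) (D U : nat -> bool) m :
  (forall j, (j < m)%N -> D j || U j) ->
  (forall j, (j < m)%N -> ~~ (D j && U j)) ->
  (forall j, D j -> f j.+1 \subset f j) ->
  (forall j, U j -> f j \subset f j.+1) ->
  (forall j, (j <= m)%N -> f j != set0) ->
  (0 < m)%N -> D 0 -> U m.-1 ->
  (exists e, (0 < e < m)%N && (U e.-1 && D e)) ->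
  [/\ f 1 :&: upI f D U m != set0, f m.-1 :&: upI f D U m != set0 &
   forall P : pred T,
     (forall e, (0 < e < m)%N && (U e.-1 && D e) ->
        forall x y, x \in f e -> y \in f e -> P x = P y) ->
     forall x y, x \in upI f D U m -> y \in upI f D U m -> P x = P y].
Proof.
move=> hDU hnDU hDs hUs hne hm0 hD0 hUm hex.
pose up := fun e => (0 < e < m)%N && (U e.-1 && D e).
have upE : forall e, up e = (0 < e < m)%N && (U e.-1 && D e) by [].
clearbody up.
have hex' : exists e, up e by case: hex => e he; exists e; rewrite upE.
have hwalk := walk hDU hnDU hDs hUs.
have hcom : forall c j1 j2, (c <= m)%N -> f c \subset f j1 -> f c \subset f j2 ->
    exists x, x \in f j1 /\ x \in f j2.
  move=> c j1 j2 hc h1 h2; case/set0Pn: (hne c hc) => x hx.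
  by exists x; split; [apply: (subsetP h1) | apply: (subsetP h2)].
case: (ex_minnP hex') => a0 ha0 hmin.
have ub : forall i, up i -> (i <= m)%N by move=> i; rewrite upE => /andP [/andP [_ /ltnW]].
case: (ex_maxnP hex' ub) => a1 ha1 hmax.
split.
- move: (ha0); rewrite upE => /andP [/andP [h0 hm] /andP [hU hD]].
  have [c hc hsub] := hwalk a0.-1 0%N ltac:(lia) hD0
      ltac:(by rewrite add0n) ltac:(move=> e he; apply/negP => hup;
         have := hmin e ltac:(rewrite upE; apply/andP; split => //; lia); lia).
  have [x [hx1 hx2]] := hcom c 1%N a0 ltac:(lia) (hsub 1%N ltac:(lia))
     (hsub a0 ltac:(lia)).
  apply/set0Pn; exists x; rewrite inE hx1 /=; apply/upIP; exists a0 => //.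
  by rewrite h0 hm hU hD.
- move: (ha1); rewrite upE => /andP [/andP [h0 hm] /andP [hU hD]].
  have [c hc hsub] := hwalk (m.-1 - a1)%N a1 ltac:(lia) hD
      ltac:(by have -> : (a1 + (m.-1 - a1))%N = m.-1 by lia)
      ltac:(move=> e he; apply/negP => hup;
         have := hmax e ltac:(rewrite upE; apply/andP; split => //; lia); lia).
  have [x [hx1 hx2]] := hcom c m.-1 a1 ltac:(lia) (hsub m.-1 ltac:(lia))
     (hsub a1 ltac:(lia)).
  apply/set0Pn; exists x; rewrite inE hx1 /=; apply/upIP; exists a1; [by rewrite -upE | done].
- move=> P hP.
  case/set0Pn: (hne a0 ltac:(move: (ha0); rewrite upE => /andP [/andP [_ ?] _]; lia)) => x0 hx0.
  have key : forall e, up e -> forall x, x \in f e -> P x = P x0.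
    elim/ltn_ind => e IH he x hx.
    case: (eqVneq e a0) => [hea|hea].
      by move: hx; rewrite hea => hx; apply: (hP a0) => //; rewrite -upE.
    have hlt : (a0 < e)%N by have := hmin e he; clear -hea; lia.
    have hex2 : exists i, up i && (i < e)%N by exists a0; apply/andP; split.
    have ub2 : forall i, up i && (i < e)%N -> (i <= e)%N
      by move=> i /andP [_ /ltnW].
    case: (ex_maxnP hex2 ub2) => a /andP [ha hae] hmax2.
    move: (ha); rewrite upE => /andP [/andP [h0 hm] /andP [hUa hDa]].
    move: (he); rewrite upE => /andP [/andP [h0e hme] /andP [hUe hDe]].
    have hno : forall e', (a < e' <= a + (e.-1 - a))%N -> ~~ (U e'.-1 && D e').
      move=> e' he'; apply/negP => hup.
      have h1 : up e' && (e' < e)%N.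
        apply/andP; split; last by clear -he' hae h0e; lia.
        by rewrite upE hup andbT; apply/andP; split; clear -he' hae hme h0; lia.
      by have := hmax2 e' h1; clear -he'; lia.
    have hk : (a + (e.-1 - a) < m)%N by clear -hae hme; lia.
    have ee : (a + (e.-1 - a))%N = e.-1 by clear -hae; lia.
    have hUk : U (a + (e.-1 - a))%N by rewrite ee.
    have [c hc hsub] := hwalk (e.-1 - a)%N a hk hDa hUk hno.
    have [z [hz1 hz2]] := hcom c e a ltac:(clear -hc hae hme; lia)
       (hsub e ltac:(clear -hae; lia)) (hsub a ltac:(clear -hae; lia)).
    rewrite (hP e ltac:(by rewrite -upE) x z hx hz1); exact: (IH a hae ha z hz2).
  move=> x y /upIP [e he hx] /upIP [e' he' hy].
  by rewrite (key e ltac:(by rewrite upE) x hx) (key e' ltac:(by rewrite upE) y hy).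
Qed.


Lemma arcD_sub n (C : {set {set {set 'I_n}}}) u v : arcD C u v -> v \subset u.
Proof. by case/existsP => c /andP [_ /andP [/eqP -> hv]]; apply: bigcup_sup. Qed.

Lemma arcD_of n (C : {set {set {set 'I_n}}}) c m :
  c \in C -> m \in c -> arcD C (Defs.resultant c) m.
Proof. by move=> hc hm; apply/existsP; exists c; rewrite hc eqxx hm. Qed.

Lemma conn_sub n (C : {set {set {set 'I_n}}}) u v :
  connect (arcD C) u v -> v \subset u.
Proof.
case/connectP => p; elim: p u => [|w p IH] u /=; first by move=> _ ->.
case/andP => a hp hv; exact: subset_trans (IH _ hp hv) (arcD_sub a).
Qed.

Lemma conn_step n (C : {set {set {set 'I_n}}}) u v :
  connect (arcD C) u v -> u != v -> exists2 w, arcD C u w & connect (arcD C) w v.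
Proof.
case/connectP => [[|w p]] /=; first by move=> _ ->; rewrite eqxx.
case/andP => a hp -> _; exists w => //; apply/connectP; by exists p.
Qed.

Lemma arcD_M n (M : {set {set 'I_n}}) C u v :
  linearization M C -> arcD C u v -> (v \in M) && (u \in M).
Proof.
case=> _ _ hCM /existsP [c /andP [hc /andP [/eqP -> hv]]].
by have [h1 h2] := hCM c hc; rewrite h2 (subsetP h1 v hv).
Qed.

Lemma PL_le_sing (R : realType) n (M : {set {set 'I_n}}) C y t j :
  linearization M C -> consistent M C -> @PL R n M C y -> t \in M -> j \in t ->
  (y t <= y [set j])%R.
Proof.
move=> [h0 hSM hCM] hCons [h1 h2 h3 h4].
move: {2}#|t| (leqnn #|t|) => k; elim: k t => [|k IH] t hk htM hj.
  by move: hk; rewrite leqn0 => /eqP/cards0_eq => ht; rewrite ht inE in hj.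
case: (boolP (t \in Sing n)) => hs.
  by case/imsetP: hs => i _ ht; move: hj; rewrite ht => /set1P ->.
have hP : t \in Prop_mono M by rewrite inE hs htM.
case: (hCons t hP) => c hc [hres hsm].
move: hj; rewrite -hres => /bigcupP [m hm hjm].
have [hcM _] := hCM c hc.
apply: (le_trans (h3 c m hc hm)); apply: IH => //; last exact: (subsetP hcM).
by have := hsm m hm; lia.
Qed.

Lemma PL_one (R : realType) n (M : {set {set 'I_n}}) C y t :
  linearization M C -> consistent M C -> @PL R n M C y -> t \in M ->
  (forall j, j \in t -> y [set j] = 1%R) -> y t = 1%R.
Proof.
move=> [h0 hSM hCM] hCons [h1 h2 h3 h4].
move: {2}#|t| (leqnn #|t|) => k; elim: k t => [|k IH] t hk htM hj.
  by move: hk htM; rewrite leqn0 => /eqP/cards0_eq ->; rewrite (negbTE h0).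
case: (boolP (t \in Sing n)) => hs.
  by case/imsetP: hs => i _ ht; rewrite ht; apply: hj; rewrite ht set11.
have hP : t \in Prop_mono M by rewrite inE hs htM.
case: (hCons t hP) => c hc [hres hsm].
have [hcM _] := hCM c hc.
have hm1 : forall m, m \in c -> y m = 1%R.
  move=> m hm; apply: IH; first by have := hsm m hm; lia.
    exact: (subsetP hcM).
  by move=> j hjm; apply: hj; rewrite -hres; apply/bigcupP; exists m.
have := h4 c hc; rewrite (eq_bigr (fun _ => 1%R)) // sumr_const hres.
have := h2 t htM; case/andP => _ hle hs1.
apply/eqP; rewrite eq_le hle /=.
move: hs1; set N := (1 *+ #|c|)%R; lra.
Qed.

Local Open Scope ring_scope.


Lemma conv_eq (R : realType) k (l a b : 'I_k -> R) :
  (forall i, 0 <= l i) -> (forall i, a i <= b i) ->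
  \sum_i l i * a i = \sum_i l i * b i -> forall i, l i != 0 -> a i = b i.
Proof.
move=> hl hab hs i hli.
have h0 : \sum_i l i * (b i - a i) = 0.
  under eq_bigr do rewrite mulrBr.
  by rewrite sumrB hs subrr.
have hge : forall j, predT j -> 0 <= l j * (b j - a j) by move=> j _; rewrite mulr_ge0 // subr_ge0.
have := psumr_eq0P hge h0 isT (i:=i).
by move/eqP; rewrite mulf_eq0 (negbTE hli) /= subr_eq0 => /eqP ->.
Qed.

Lemma int01 (R : realType) (v : R) :
  v \is a Num.int -> 0 <= v -> v <= 1 -> v != 1 -> v = 0.
Proof.
move=> hi h0; move: hi; rewrite intrEge0 // => /natrP [k ->].
case: k => [|[|k]] h1 h2 //; first by rewrite eqxx in h2.
by move: h1; rewrite -[X in _ <= X]/(1%:R) ler_nat.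
Qed.

Lemma LP_main (R : realType) n (M : {set {set 'I_n}}) (C : {set {set {set 'I_n}}})
  (T VZ : {set {set 'I_n}}) (AZ : {set {set 'I_n} * {set 'I_n}}) (I : {set 'I_n})
  (ustar w1 w2 : {set 'I_n}) (F : {set 'I_n} -> Prop) :
  linearization M C -> consistent M C -> simple_lin M C -> T \subset Prop_mono M ->
  VZ \subset M -> VZ \subset succL C T ->
  (forall t, t \in T -> (#|succL C [set t] :&: UZ VZ AZ| <= 1)%N) ->
  ustar \in UZ VZ AZ -> arcD C ustar w1 -> arcD C ustar w2 -> w1 != w2 ->
  w1 :&: I != set0 -> w2 :&: I != set0 ->
  (forall u, F u -> [/\ u \in UZ VZ AZ, u != ustar & u \subset I]) ->
  (forall P : pred 'I_n, (forall u, F u -> forall x y, x \in u -> y \in u -> P x = P y) ->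
       forall x y, x \in I -> y \in I -> P x = P y) ->
  ~ integral_polytope (proj (Sing n :|: T) (@PL R n M C)).
Proof.
move=> hL hCons [hS1 _] hT hVM hVT he hu hw1 hw2 hw12 hI1 hI2 hF hP hint.
have [h0M hSM hCM] := hL.
have hUV : forall u, u \in UZ VZ AZ -> u \in VZ by move=> u; rewrite inE => /andP [].
have hustM : ustar \in M := subsetP hVM _ (hUV _ hu).
have hMn : forall w, w \in M -> w != set0.
  by move=> w hw; apply/negP => /eqP h; rewrite -h hw in h0M.
have hwM : forall w, arcD C ustar w -> [/\ w \in M, w != set0 & w \subset ustar].
  move=> w hw; have /andP [hwM _] := arcD_M hL hw.
  split; first done. exact: hMn. exact: (arcD_sub hw).
have [hw1M hw1n hw1s] := hwM _ hw1.
have [hw2M hw2n hw2s] := hwM _ hw2.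
have hsing : forall j (w : {set 'I_n}), w \subset [set j] -> w != set0 -> w = [set j].
  by move=> j w; rewrite subset1 => /orP [/eqP ->|/eqP ->] //; rewrite eqxx.
have hSj : forall j, [set j] \in Sing n by move=> j; apply/imsetP; exists j.
have hustP : ustar \in Prop_mono M.
  rewrite inE hustM andbT; apply/negP => /imsetP [j _ hj].
  rewrite hj in hw1s hw2s.
  by move: hw12; rewrite (hsing _ _ hw1s hw1n) (hsing _ _ hw2s hw2n) eqxx.
have hustn := hMn _ hustM.
have hbig : forall v, connect (arcD C) v ustar -> v \notin Sing n.
  move=> v hv; apply/negP => /imsetP [j _ hj].
  have hs := conn_sub hv; rewrite hj in hs.
  by move: hustP; rewrite inE (hsing _ _ hs hustn) hSj.
have huniq : forall r c1 c2, r \in Prop_mono M -> c1 \in C -> c2 \in C ->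
    Defs.resultant c1 = r -> Defs.resultant c2 = r -> c1 = c2.
  move=> r c1 c2 hr h1 h2 e1 e2; have [c0 hc0] := cards1P (introT eqP (hS1 r hr)).
  have : c1 \in [set c in C | Defs.resultant c == r] by rewrite inE h1 e1 eqxx.
  have : c2 \in [set c in C | Defs.resultant c == r] by rewrite inE h2 e2 eqxx.
  by rewrite hc0 => /set1P -> /set1P ->.
pose d (v : {set 'I_n}) : R :=
  if connect (arcD C) v ustar then 1 else if v :&: I != set0 then 2^-1 else 0.
have hd01 : forall v, 0 <= d v /\ d v <= 1.
  by move=> v; rewrite /d; case: ifP => _; [|case: ifP => _]; split; lra.
have hd1 : forall v, connect (arcD C) v ustar -> d v = 1 by move=> v hv; rewrite /d hv.
have hdh : forall v, ~~ connect (arcD C) v ustar -> v :&: I != set0 -> d v = 2^-1.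
  by move=> v hv hvI; rewrite /d (negbTE hv) hvI.
have hd0 : forall v, ~~ connect (arcD C) v ustar -> ~~ (v :&: I != set0) -> d v = 0.
  by move=> v hv hvI; rewrite /d (negbTE hv) (negbTE hvI).
have hdhalf : forall v, v :&: I != set0 -> 2^-1 <= d v.
  by move=> v hv; rewrite /d; case: ifP => _; [lra | rewrite hv; lra].
pose y v := if v \in M then 1 - d v else 0.
pose K := Sing n :|: T.
pose x v := if v \in K then y v else 0.
have hKM : forall v, v \in K -> v \in M.
  move=> v; rewrite inE => /orP [hv|hv]; first exact: (subsetP hSM).
  by have := subsetP hT v hv; rewrite inE => /andP [].
have hyPL : @PL R n M C y.
  split.
  - by move=> m hm; rewrite /y (negbTE hm).
  - by move=> m hm; rewrite /y hm; have [h1 h2] := hd01 m; apply/andP; split; lra.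
  - move=> c m hc hm; have [hcM hrM] := hCM c hc.
    have hmM := subsetP hcM m hm; rewrite /y hrM hmM.
    suff : d m <= d (Defs.resultant c) by move=> h; lra.
    have ha := arcD_of hc hm.
    case: (boolP (connect (arcD C) m ustar)) => hcm.
      by rewrite (hd1 _ hcm) (hd1 _ (connect_trans (connect1 ha) hcm)).
    case: (boolP (m :&: I != set0)) => hmI.
      rewrite (hdh _ hcm hmI); apply: hdhalf.
      case/set0Pn: hmI => z; rewrite inE => /andP [hz1 hz2].
      by apply/set0Pn; exists z; rewrite inE hz2 (subsetP (arcD_sub ha) z hz1).
    by rewrite (hd0 _ hcm hmI); have [] := hd01 (Defs.resultant c).
  - move=> c hc; have [hcM hrM] := hCM c hc.
    rewrite /y hrM (eq_bigr (fun m => 1 - d m)); last first.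
      by move=> m hm; rewrite (subsetP hcM m hm).
    rewrite sumrB sumr_const.
    suff : d (Defs.resultant c) <= \sum_(m in c) d m.
      by move: (\sum_(m in c) d m) => S h; lra.
    have hsum_ge : forall m, m \in c -> d m <= \sum_(m in c) d m.
      move=> m hm; rewrite (bigD1 m) //=.
      have : 0 <= \sum_(i in c | i != m) d i by apply: sumr_ge0 => i _; case: (hd01 i).
      lra.
    case: (boolP (connect (arcD C) (Defs.resultant c) ustar)) => hcr.
      rewrite (hd1 _ hcr).
      case: (eqVneq (Defs.resultant c) ustar) => hr.
        case/existsP: hw1 => c1 /andP [hc1 /andP [/eqP e1 hw1c]].
        case/existsP: hw2 => c2 /andP [hc2 /andP [/eqP e2 hw2c]].
        have ec1 := huniq ustar c1 c hustP hc1 hc (esym e1) hr.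
        have ec2 := huniq ustar c2 c hustP hc2 hc (esym e2) hr.
        rewrite ec1 in hw1c; rewrite ec2 in hw2c.
        rewrite (bigD1 w1) //= (bigD1 w2) /=; last by rewrite hw2c eq_sym hw12.
        have : 0 <= \sum_(i | (i \in c) && (i != w1) && (i != w2)) d i.
          by apply: sumr_ge0 => i _; case: (hd01 i).
        have := hdhalf _ hI1; have := hdhalf _ hI2; lra.
      have [r' ha' hc'] := conn_step hcr hr.
      case/existsP: ha' => c' /andP [hc'C /andP [/eqP e' hr'c']].
      have hrP : Defs.resultant c \in Prop_mono M by rewrite inE hrM andbT hbig.
      have ec := huniq _ c' c hrP hc'C hc (esym e') erefl.
      rewrite ec in hr'c'.
      by have := hsum_ge r' hr'c'; rewrite (hd1 _ hc').
    case: (boolP (Defs.resultant c :&: I != set0)) => hrI.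
      rewrite (hdh _ hcr hrI).
      case/set0Pn: hrI => j; rewrite inE => /andP [/bigcupP [m hm hjm] hjI].
      apply: le_trans (hsum_ge m hm); apply: hdhalf.
      by apply/set0Pn; exists j; rewrite inE hjm hjI.
    by rewrite (hd0 _ hcr hrI); apply: sumr_ge0 => i _; case: (hd01 i).
have hxQ : proj K (@PL R n M C) x.
  split; first by move=> m hm; rewrite /x (negbTE hm).
  by exists y => // m hm; rewrite /x hm.
have [k [p [l [hp hl hl1 hx]]]] := (hint x).1 hxQ.
have hwit : forall i, exists2 y', @PL R n M C y' & forall m, m \in K -> p i m = y' m.
  by move=> i; case: (hp i) => [[_ hh] _].
have hbnd : forall i v, v \in K -> 0 <= p i v /\ p i v <= 1.
  move=> i v hv; have [y' [_ h2 _ _] hey'] := hwit i.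
  by rewrite hey' //; case/andP: (h2 v (hKM v hv)).
have hTK : forall t, t \in T -> t \in K by move=> t ht; rewrite inE ht orbT.
have hSK : forall j, [set j] \in K by move=> j; rewrite inE hSj.
have hle : forall i t j, t \in T -> j \in t -> p i t <= p i [set j].
  move=> i t j ht hj; have [y' hy' hey'] := hwit i.
  rewrite (hey' t (hTK _ ht)) (hey' _ (hSK j)); exact: PL_le_sing hL hCons hy' (hKM _ (hTK _ ht)) hj.
have hsI : forall j, ([set j] :&: I != set0) = (j \in I).
  move=> j; apply/set0Pn/idP.
    by case=> z; rewrite !inE => /andP [/eqP -> ->].
  by move=> hj; exists j; rewrite !inE eqxx hj.
have hsnc : forall j, ~~ connect (arcD C) [set j] ustar.
  by move=> j; apply/negP => /hbig; rewrite hSj.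
have hxs : forall j, x [set j] = if j \in I then 2^-1 else 1.
  move=> j; rewrite /x hSK /y (hKM _ (hSK j)).
  case: (boolP (j \in I)) => hj.
    by rewrite hdh ?hsnc ?hsI //; lra.
  by rewrite hd0 ?hsnc ?hsI // subr0.
have hconst1 : forall i, l i != 0 -> forall v, x v = 1 -> p i v = 1.
  move=> i hli v hv; apply: (@conv_eq R k l (fun i => p i v) (fun _ => 1)) => //.
    move=> i'; case: (boolP (v \in K)) => hvK; first by case: (hbnd i' v hvK).
    by move: hv; rewrite /x (negbTE hvK) => /eqP; rewrite eq_sym oner_eq0.
  by rewrite -hx hv; under eq_bigr do rewrite mulr1.
have hconst0 : forall i, l i != 0 -> forall v, v \in K -> x v = 0 -> p i v = 0.
  move=> i hli v hvK hv; symmetry.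
  apply: (@conv_eq R k l (fun _ => 0) (fun i => p i v)) => //.
    by move=> i'; case: (hbnd i' v hvK).
  by rewrite -hx hv; under eq_bigr do rewrite mulr0; rewrite big1.
have hconst2 : forall i, l i != 0 -> forall v w, (forall i', p i' v <= p i' w) ->
    x v = x w -> p i v = p i w.
  move=> i hli v w hvw hv; apply: (@conv_eq R k l (fun i => p i v) (fun i => p i w)) => //.
  by rewrite -!hx.
case/set0Pn: hI1 => i0; rewrite inE => /andP [_ hi0].
have hz : forall i, l i != 0 -> p i [set i0] = 0.
  move=> i hli; have [y' hy' hey'] := hwit i.
  have ha : forall j, j \notin I -> p i [set j] = 1.
    by move=> j hj; apply: hconst1 => //; rewrite hxs (negbTE hj).
  have hb2 : forall u, F u -> forall j j', j \in u -> j' \in u -> p i [set j] = p i [set j'].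
    move=> u hFu; have [huU hun huI] := hF u hFu; have huV := hUV u huU.
    have := subsetP hVT u huV; rewrite inE => /existsP [t /andP [htT htu]].
    have htnc : ~~ connect (arcD C) t ustar.
      apply/negP => htc; have := he t htT.
      have : [set u; ustar] \subset succL C [set t] :&: UZ VZ AZ.
        apply/subsetP => v; rewrite in_set2 => /orP [/eqP -> | /eqP ->];
          rewrite in_setI ?huU ?hu andbT inE; apply/existsP; exists t;
          by rewrite in_set1 eqxx.
      by move/subset_leq_card; rewrite cards2 hun => h1 h2; have := leq_trans h1 h2.
    have hsubt := conn_sub htu.
    have htM := hKM _ (hTK _ htT).
    have htI : t :&: I != set0.
      case/set0Pn: (hMn u (subsetP hVM u huV)) => z hz.
      by apply/set0Pn; exists z; rewrite inE (subsetP hsubt z hz) (subsetP huI z hz).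
    have hxt : x t = 2^-1 by rewrite /x hTK // /y htM hdh //; lra.
    have key : forall j, j \in u -> p i t = p i [set j].
      move=> j hj; apply: hconst2 => //.
        by move=> i'; apply: hle => //; exact: (subsetP hsubt).
      by rewrite hxt hxs (subsetP huI j hj).
    by move=> j j' hj hj'; rewrite -(key j hj) -(key j' hj').
  have hPc := hP (fun j => p i [set j] == 0)
     ltac:(by move=> u hFu a b ha' hb'; rewrite /= (hb2 u hFu a b ha' hb')).
  have := subsetP hVT ustar (hUV _ hu); rewrite inE => /existsP [ts /andP [htsT htsc]].
  have htsM := hKM _ (hTK _ htsT).
  have hxts : x ts = 0 by rewrite /x hTK // /y htsM hd1 // subrr.
  have hpts := hconst0 i hli ts (hTK _ htsT) hxts.
  case: (boolP [exists j, (j \in ts) && (y' [set j] != 1)]) => [/existsP [j /andP [hj hyj]] | hno]; last first.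
    have := PL_one hL hCons hy' htsM.
    rewrite -(hey' ts (hTK _ htsT)) hpts => h; have : (0 : R) = 1.
      apply: h => j hj; apply/eqP; move/existsPn: hno => /(_ j); by rewrite hj /= negbK.
    by move/eqP; rewrite eq_sym oner_eq0.
  have hpj : p i [set j] != 1 by rewrite hey'.
  have hjI : j \in I by case: (boolP (j \in I)) => // hj'; rewrite (ha j hj') eqxx in hpj.
  have hpj0 : p i [set j] = 0.
    have [hb0 hb1] := hbnd i [set j] (hSK j).
    by apply: int01 => //; case: (hp i) => _ /(_ [set j]).
  by have := hPc j i0 hjI hi0; rewrite /= hpj0 eqxx => /esym/eqP.
have := hx [set i0]; rewrite hxs hi0 big1; last first.
  by move=> i _; case: (eqVneq (l i) 0) => [->|hli]; rewrite ?mul0r // hz // mulr0.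
by move/eqP; rewrite invr_eq0 pnatr_eq0.
Qed.

Local Close Scope ring_scope.


Lemma two_in (T : finType) (O : {set T}) a b :
  O \subset [set a; b] -> (2 <= #|O|)%N -> a \in O /\ b \in O.
Proof.
move=> hO hc; split; apply/negPn/negP => hn.
  have : O \subset [set b].
    apply/subsetP => x hx; have := subsetP hO x hx; rewrite !inE => /orP [/eqP hxa|//].
    by rewrite -hxa hx in hn.
  by move/subset_leq_card; rewrite cards1 => h; have := leq_trans hc h.
have : O \subset [set a].
  apply/subsetP => x hx; have := subsetP hO x hx; rewrite !inE => /orP [//|/eqP hxb].
  by rewrite -hxb hx in hn.
by move/subset_leq_card; rewrite cards1 => h; have := leq_trans hc h.
Qed.

Lemma cycle_main (R : realType) n (M : {set {set 'I_n}}) (C : {set {set {set 'I_n}}})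
  (T VZ : {set {set 'I_n}}) (AZ : {set {set 'I_n} * {set 'I_n}})
  (ustar u2 : {set 'I_n}) (p : seq {set 'I_n}) :
  linearization M C -> consistent M C -> simple_lin M C -> T \subset Prop_mono M ->
  VZ \subset M -> (forall u v, (u, v) \in AZ -> arcD C u v) ->
  uniq (ustar :: p) -> (3 <= size (ustar :: p))%N -> VZ =i ustar :: p ->
  (forall u v, ((u, v) \in AZ) || ((v, u) \in AZ) =
     [&& u \in ustar :: p, v \in ustar :: p &
         (next (ustar :: p) u == v) || (next (ustar :: p) v == u)]) ->
  ustar \in UZ VZ AZ -> u2 \in UZ VZ AZ -> ustar != u2 ->
  VZ \subset succL C T ->
  (forall t, t \in T -> (#|succL C [set t] :&: UZ VZ AZ| <= 1)%N) ->
  ~ integral_polytope (proj (Sing n :|: T) (@PL R n M C)).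
Proof.
move=> hL hCons hSimp hT hVM hAZ hu hs3 hVs hadj hus hu2 hne hVT he.
have [h0M _ _] := hL.
set s := ustar :: p in hu hs3 hVs hadj.
pose m := size s.
pose f j := nth ustar s j.
pose D j := (f j, f j.+1) \in AZ.
pose U j := (f j.+1, f j) \in AZ.
have hm3 : (3 <= m)%N by [].
have hfm : f m = ustar by rewrite /f nth_default.
have hmem : forall j, (j <= m)%N -> f j \in s.
  move=> j; rewrite leq_eqVlt => /orP [/eqP ->|hj]; first by rewrite hfm mem_head.
  exact: mem_nth.
have hinj : forall j k, (j < m)%N -> (k < m)%N -> f j = f k -> j = k.
  by move=> j k hj hk /eqP; rewrite nth_uniq // => /eqP.
have hnext : forall j, (j < m)%N -> next s (f j) = f j.+1.
  by move=> j hj; rewrite /f next_nth (mem_nth _ hj) index_uniq.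
have hadjj : forall j, (j < m)%N -> D j || U j.
  move=> j hj; rewrite /D /U hadj (hmem j (ltnW hj)) (hmem j.+1 hj) hnext //.
  by rewrite eqxx.
have hsubD : forall j, D j -> f j.+1 \subset f j by move=> j h; exact: arcD_sub (hAZ _ _ h).
have hsubU : forall j, U j -> f j \subset f j.+1 by move=> j h; exact: arcD_sub (hAZ _ _ h).
have hneq : forall j, (j < m)%N -> f j != f j.+1.
  move=> j hj; apply/eqP => hfj.
  case: (ltnP j.+1 m) => hj1.
    by move: (hinj _ _ hj hj1 hfj) => e; clear -e; lia.
  have ejm : j.+1 = m by clear -hj hj1; lia.
  rewrite ejm hfm in hfj.
  by move: (hinj j 0%N hj ltac:(clear -hm3; lia) hfj) => e; clear -e ejm hm3; lia.
have hnDU : forall j, (j < m)%N -> ~~ (D j && U j).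
  move=> j hj; apply/negP => /andP [a b].
  by move: (hneq j hj); rewrite eqEsubset (hsubU _ b) (hsubD _ a).
have hMn : forall w, w \in M -> w != set0.
  by move=> w hw; apply/negP => /eqP h; rewrite -h hw in h0M.
have hfne : forall j, (j <= m)%N -> f j != set0.
  by move=> j hj; apply: hMn; apply: (subsetP hVM); rewrite hVs hmem.
pose prv j := if j is 0 then m.-1 else j.-1.
have hout : forall j v, (j < m)%N -> (f j, v) \in AZ -> v = f j.+1 \/ v = f (prv j).
  move=> j v hj hv.
  have := hadj (f j) v; rewrite hv orTb => /esym /and3P [_ hvs /orP [/eqP <-|/eqP hn]].
    by left; rewrite hnext.
  right.
  have hk : (index v s < m)%N by rewrite index_mem.
  have hvk : f (index v s) = v by rewrite /f nth_index.
  rewrite -hvk hnext // in hn.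
  case: (ltnP (index v s).+1 m) => hk1.
    have := hinj _ _ hk1 hj hn => e; rewrite -hvk -e /prv /=; done.
  have ekm : (index v s).+1 = m by clear -hk hk1; lia.
  rewrite ekm hfm in hn.
  have := hinj 0%N j ltac:(clear -hm3; lia) hj hn => e; rewrite -e /prv -hvk.
  by congr f; rewrite /prv; clear -ekm; lia.
have hpat : forall j, (j < m)%N -> f j \in UZ VZ AZ ->
    D j /\ (f j, f (prv j)) \in AZ.
  move=> j hj; rewrite inE => /andP [_ hc].
  have hO : [set v | (f j, v) \in AZ] \subset [set f j.+1; f (prv j)].
    apply/subsetP => v; rewrite inE => hv.
    by case: (hout j v hj hv) => ->; rewrite !inE eqxx ?orbT.
  have [h1 h2] := two_in hO hc.
  by move: h1 h2; rewrite !inE.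
have hm0 : (0 < m)%N by clear -hm3; lia.
have [hD0 hUm'] := hpat 0%N hm0 hus.
have hUm : U m.-1.
  by rewrite /U (prednK hm0) hfm.
have hus2 : u2 \in s by rewrite -hVs; move: hu2; rewrite inE => /andP [].
set j2 := index u2 s.
have hj2 : (j2 < m)%N by rewrite index_mem.
have hfj2 : f j2 = u2 by rewrite /f nth_index.
have hj20 : (0 < j2)%N.
  rewrite lt0n; apply/negP => /eqP e; move: hfj2; rewrite e => h.
  by rewrite -h eqxx in hne.
have hex : exists e, (0 < e < m)%N && (U e.-1 && D e).
  exists j2; rewrite hj20 hj2 /=.
  have [hD hP] := hpat j2 hj2 ltac:(by rewrite hfj2).
  rewrite hD andbT /U (prednK hj20).
  by move: hP; rewrite /prv; case: (j2) hj20.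
have [A1 A2 Cc] := comb hadjj hnDU hsubD hsubU hfne hm0 hD0 hUm hex.
have hupUZ : forall e, (0 < e < m)%N -> U e.-1 -> D e -> f e \in UZ VZ AZ.
  move=> e /andP [he0 hem] hU hD; rewrite inE.
  have -> : f e \in VZ by rewrite hVs hmem // ltnW.
  have hdist : f e.+1 != f e.-1.
    apply/eqP => hh; case: (ltnP e.+1 m) => he1.
      by move: (hinj e.+1 e.-1 he1 ltac:(clear -hem; lia) hh) => e'; clear -e' he0; lia.
    have eem : e.+1 = m by clear -hem he1; lia.
    rewrite eem hfm in hh.
    by move: (hinj 0%N e.-1 ltac:(clear -hm3; lia) ltac:(clear -hem; lia) hh) => e'; clear -e' eem hm3 he0; lia.
  have : [set f e.+1; f e.-1] \subset [set v | (f e, v) \in AZ].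
    apply/subsetP => v; rewrite !inE => /orP [/eqP ->|/eqP ->] //.
    by move: hU; rewrite /U (prednK he0).
  by move/subset_leq_card; rewrite cards2 hdist.
move=> hint.
refine (@LP_main R n M C T VZ AZ (upI f D U m) ustar (f 1%N) (f m.-1)
   (fun u => exists2 e, (0 < e < m)%N && (U e.-1 && D e) & u = f e)
   hL hCons hSimp hT hVM hVT he hus _ _ _ _ _ _ _ hint).
- exact: hAZ _ _ hD0.
- exact: hAZ _ _ hUm'.
- by apply/eqP => hh; move: (hinj 1%N m.-1 ltac:(clear -hm3; lia) ltac:(clear -hm3; lia) hh) => e'; clear -e' hm3; lia.
- exact: A1.
- exact: A2.
- move=> u [e /andP [/andP [he0 hem] /andP [hU hD]] ->]; split.
  + by apply: hupUZ => //; rewrite he0.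
  + by apply/eqP => hh; move: (hinj e 0%N hem hm0 hh) => e'; clear -e' he0; lia.
  + by apply/subsetP => z hz; apply/upIP; exists e; rewrite ?he0 ?hem ?hU ?hD.
- move=> P hPF; apply: Cc => e hee x y hx hy.
  by apply: (hPF (f e)) => //; exists e.
Qed.

Unset Implicit Arguments.
Local Open Scope ring_scope.

Theorem lemma3p14 (R : realType) (n : nat) (M : {set {set 'I_n}})
    (C : {set {set {set 'I_n}}}) (T : {set {set 'I_n}})
    (VZ : {set {set 'I_n}}) (AZ : {set {set 'I_n} * {set 'I_n}}) :
  linearization M C -> consistent M C -> simple_lin M C ->
  T \subset Prop_mono M ->
  subgraph_cycle M C VZ AZ ->
  (1 < #|UZ VZ AZ|)%N ->
  VZ \subset succL C T ->
  (forall s t, s \in Sing n -> t \in T -> at_most_one_path C t s) ->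
  (forall s, s \in Sing n -> (#|predL C [set s] :&: LZ VZ AZ| <= 1)%N) ->
  (forall t, t \in T -> (#|succL C [set t] :&: UZ VZ AZ| <= 1)%N) ->
  ~ integral_polytope (proj (Sing n :|: T) (@PL R n M C)).
Proof.
move=> hL hCons hSimp hT [hVM hAZ [s [hu hs3 hVs hadj]]] hUZ hVT _ _ he hint.
case/card_gt1P: hUZ => us [u2 [hus hu2 hne]].
have husS : us \in s by rewrite -hVs; move: hus; rewrite inE => /andP [].
case: (rot_to husS) => i p hrot.
refine (@cycle_main R n M C T VZ AZ us u2 p hL hCons hSimp hT hVM hAZ _ _ _ _
   hus hu2 hne hVT he hint).
- by rewrite -hrot rot_uniq.
- by rewrite -hrot size_rot.
- by move=> v; rewrite -hrot mem_rot hVs.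
- by move=> u v; rewrite -hrot !mem_rot !(next_rot i hu) hadj.
Qed.
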